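(* Let $\mathcal M_{A,B,\partial_0}$ be an $M$-pair. The partitions $B=P\sqcup Q\sqcup R$ and $A\setminus B=X\sqcup Y\sqcup Z$, the bijections $Q\to R$ and $Y\to Z$, the subset $H=H(\partial_0)\subset P$, and the injection $h_+:H\to X$ (which is well defined) depend only on the $(A,B)$-equivalence class of $\partial_0$; i.e. they are invariants of the $M$-pair up to isomorphism.
   Context: $\mathbb E$ is a field; $A=\{a_1\prec\dots\prec a_N\}$ a finite linearly ordered graded set, $\mathbb E(A)$ the graded vector space with basis $A$. An $M$-differential: degree $-1$, $\partial^2=0$, $\partial(a_i)\in\mathrm{span}\{a_1,\dots,a_{i-1}\}$; for $B\subset A$ with $\partial\mathbb E(B)\subset\mathbb E(B)$ it is an $M_{A,B}$-differential and $\mathcal M_{A,B,\partial}$ an $M$-pair; $\partial_B$ is the restriction to $\mathbb E(B)$ and $\partial_{A\setminus B}$ the induced differential on $\mathbb E(A)/\mathbb E(B)\cong\mathbb E(A\setminus B)$. $(A,B)$-equivalence: conjugation by a graded automorphism preserving each $\mathrm{span}\{a_1,\dots,a_i\}$ and $\mathbb E(B)$. Elementary $M$-differential: each basis element goes to $0$ or to one basis element, no two basis elements to the same one. Every $M_{A,B}$-differential $\partial_0$ is $(A,B)$-equivalent to some $\partial$ with $\partial_B$, $\partial_{A\setminus B}$ elementary; for such $\partial$: $Q=\{b\in B:\partial_B b\ne0\}$, $R=\partial_B(Q)$, $P=B\setminus(Q\cup R)$, with bijection $\partial_B:Q\to R$; $Y=\{a\in A\setminus B:\partial_{A\setminus B}a\ne0\}$,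 $Z=\partial_{A\setminus B}(Y)$, $X$ the rest, with bijection $\partial_{A\setminus B}:Y\to Z$. Quasi-elementary: $\partial_B,\partial_{A\setminus B}$ elementary, each $\partial(x)$ ($x\in X$) contains (has nonzero coefficient on) at most one element of $P$, with coefficient $1$, and each element of $P$ appears in at most one $\partial(x)$, $x\in X$; every $M_{A,B}$-differential is $(A,B)$-equivalent to a quasi-elementary one. $H(\partial_0)$ is the set of $\partial_0$-boundary homologically essential elements: with $B=\{b_1\prec\dots\prec b_K\}$, $I_k=\iota_*H_*(\mathbb E(\{b_1,\dots,b_k\}),\partial_B)\cap\partial_*H_*(\mathbb E(A),\mathbb E(B),\partial_0)\subset H_*(\mathbb E(B),\partial_B)$ ($\iota_*$ induced by inclusion, $\partial_*$ the connecting homomorphism), $I_0=0$, and $b_k\in H(\partial_0)$ iff $I_k\ne I_{k-1}$. The map $h_+:H\to X$ sends $b$ to the element $x\in X$ such that $\partial'(x)$ contains $b$, where $\partial'$ is a quasi-elementary differential $(A,B)$-equivalent to $\partial_0$. *)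

(* Defs.v *)
From HB Require Import structures.
From mathcomp Require Import all_boot all_order all_algebra.
Set Implicit Arguments. Unset Strict Implicit. Unset Printing Implicit Defensive.
Import GRing.Theory.
Local Open Scope ring_scope.

(* A = {a_1 < ... < a_N} is modelled by 'I_N with its natural order;
   deg : 'I_N -> int is the grading; B : {set 'I_N}.
   Vectors of E(A) are row vectors 'rV[E]_N (coordinates in the basis A);
   an endomorphism is a matrix D : 'M[E]_N acting on the right, v |-> v *m D,
   so row i of D is the image of a_i and  D i j  is the coefficient of a_j
   in the image of a_i. *)

Section Defs.
Variables (E : fieldType) (N : nat).
Implicit Types (deg : 'I_N -> int) (B S : {set 'I_N}) (D : 'M[E]_N).

Definition MAB_diff deg B D : Prop :=
  [/\ (forall i j, D i j != 0 -> deg j = deg i - 1),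
      D *m D = 0,
      (forall i j, D i j != 0 -> (j < i)%N) &
      (forall i j, i \in B -> D i j != 0 -> j \in B)].

(* (A,B)-equivalence: conjugation by a graded automorphism g preserving each
   span{a_1..a_i} and E(B). *)
Definition AB_equiv deg B D D' : Prop :=
  exists g : 'M[E]_N,
    [/\ g \in unitmx,
        (forall i j, g i j != 0 -> (j <= i)%N),
        (forall i j, g i j != 0 -> deg j = deg i),
        (forall i j, i \in B -> g i j != 0 -> j \in B) &
        D' = invmx g *m D *m g].

(* The matrix D, restricted/induced on the span of S (S = B gives partial_B,
   S = A \ B gives the induced differential on E(A)/E(B) = E(A \ B)),
   is elementary: each basis element goes to 0 or to exactly one basis
   element, and no two basis elements go to the same one. *)
Definition elem_on S D : Prop :=
  (forall i, i \in S ->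
     (forall j, j \in S -> D i j = 0) \/
     (exists j, [/\ j \in S, D i j = 1 & (forall k, k \in S -> k != j -> D i k = 0)]))
  /\ (forall i i' j, i \in S -> i' \in S -> j \in S ->
        D i j != 0 -> D i' j != 0 -> i = i').

Definition elem_restr B D : Prop := elem_on B D /\ elem_on (~: B) D.

Definition Qset B D := [set i in B | [exists j in B, D i j != 0]].
Definition Rset B D := [set j in B | [exists i in B, D i j != 0]].
Definition Pset B D := B :\: (Qset B D :|: Rset B D).
Definition Yset B D := [set i in ~: B | [exists j in ~: B, D i j != 0]].
Definition Zset B D := [set j in ~: B | [exists i in ~: B, D i j != 0]].
Definition Xset B D := (~: B) :\: (Yset B D :|: Zset B D).

Definition bijQR B D (q r : 'I_N) : bool := [&& q \in B, r \in B & D q r != 0].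
Definition bijYZ B D (y z : 'I_N) : bool := [&& y \notin B, z \notin B & D y z != 0].

Definition quasi_elem B D : Prop :=
  [/\ elem_restr B D,
      (forall x p, x \in Xset B D -> p \in Pset B D -> D x p != 0 -> D x p = 1),
      (forall x p p', x \in Xset B D -> p \in Pset B D -> p' \in Pset B D ->
          D x p != 0 -> D x p' != 0 -> p = p') &
      (forall x x' p, x \in Xset B D -> x' \in Xset B D -> p \in Pset B D ->
          D x p != 0 -> D x' p != 0 -> x = x')].

(* Homology.  Subspaces are row spaces of matrices (mxalgebra).
   EB S = E(S) (span of the basis elements in S). *)
Definition EB S : 'M[E]_N := \matrix_(i, j) ((i == j) && (i \in S))%:R.

(* A subspace of H_*(E(B), partial_B) = Zc/Bd is represented by its preimage in
   the cycle space Zc (a subspace of E(B) containing Bd).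
   - cycles Zc = ker D :&: E(B), boundaries Bd = image of E(B) under D;
   - iota_* H(E(S)) (S subset B) has preimage (ker D :&: E(S)) + Bd;
   - the image of the connecting map d_* : H(E(A),E(B)) -> H(E(B)) has
     preimage { D c | c in E(A), D c in E(B) } = im D :&: E(B).
   Preimage of an intersection = intersection of preimages. *)
Definition Ipre B D S : 'M[E]_N :=
  (((kermx D :&: EB S) + EB B *m D) :&: (D :&: EB B))%MS.

(* b_k in H iff I_k <> I_{k-1}, where {b_1..b_k} = {b' in B | b' <= b_k}. *)
Definition H_ess B D : {set 'I_N} :=
  [set b in B | ~~ (Ipre B D [set b' in B | (b' <= b)%N]
                    == Ipre B D [set b' in B | (b' < b)%N])%MS].

Definition hplus_rel B D (b x : 'I_N) : bool := (x \in Xset B D) && (D x b != 0).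

End Defs.

(* Main.v *)
Require Import Defs.
From HB Require Import structures.
From mathcomp Require Import all_boot all_order all_algebra.
Set Implicit Arguments. Unset Strict Implicit. Unset Printing Implicit Defensive.
Import GRing.Theory.
Local Open Scope ring_scope.

Section Aux.
Variables (E : fieldType) (N : nat).
Local Notation EBm := (EB E).
Local Notation ek k := (delta_mx 0 k : 'rV[E]_N).
Implicit Types (S T C : {set 'I_N}) (M D g : 'M[E]_N).

Lemma EBE S i j : EBm S i j = ((i == j) && (i \in S))%:R.
Proof. by rewrite mxE. Qed.

Lemma mulEBl S M i j : (EBm S *m M) i j = if i \in S then M i j else 0.
Proof.
rewrite mxE (bigD1 i) //= big1 ?addr0 => [|k /negbTE ki].
  by rewrite EBE eqxx /=; case: (i \in S); rewrite ?mul1r ?mul0r.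
by rewrite EBE eq_sym ki mul0r.
Qed.

Lemma mulEBr m S (M : 'M[E]_(m, N)) i j : (M *m EBm S) i j = if j \in S then M i j else 0.
Proof.
rewrite mxE (bigD1 j) //= big1 ?addr0 => [|k /negbTE kj].
  by rewrite EBE eqxx /=; case: (j \in S); rewrite ?mulr1 ?mulr0.
by rewrite EBE kj mulr0.
Qed.

Lemma colz m m2 (A : 'M[E]_(m, N)) (X : 'M[E]_(m2, N)) p :
  (A <= X)%MS -> (forall k, X k p = 0) -> forall k, A k p = 0.
Proof.
case/submxP=> Y -> H k; rewrite mxE big1 // => l _; by rewrite H mulr0.
Qed.

Lemma sub_EB m S (A : 'M[E]_(m, N)) : (forall k l, l \notin S -> A k l = 0) -> (A <= EBm S)%MS.
Proof.
move=> H; have -> : A = A *m EBm S.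
  by apply/matrixP=> k l; rewrite mulEBr; case: ifPn => // /H ->.
exact: submxMl.
Qed.

Lemma EB_sub m S (A : 'M[E]_(m, N)) : (A <= EBm S)%MS -> forall k l, l \notin S -> A k l = 0.
Proof.
move=> sA k l lS; apply: (colz sA) => i; rewrite EBE; case: eqP => //= ->; by rewrite (negbTE lS).
Qed.

Lemma EBS S T : {subset S <= T} -> (EBm S <= EBm T)%MS.
Proof.
move=> sST; apply: sub_EB => k l lT; rewrite EBE.
case: eqP => //= ->; case lS: (l \in S) => //; by have := sST _ lS; rewrite (negbTE lT).
Qed.

Lemma rowEB S k : row k (EBm S) = if k \in S then ek k else 0.
Proof.
apply/matrixP=> i j; rewrite ord1 !mxE; case: ifP => kS; rewrite ?mxE ?andbT ?andbF ?eqxx //=.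
by rewrite eq_sym.
Qed.

Lemma EB_subP m S (X : 'M[E]_(m, N)) : (forall k, k \in S -> (ek k <= X)%MS) -> (EBm S <= X)%MS.
Proof.
move=> H; apply/row_subP=> k; rewrite rowEB; case: ifP => kS; first exact: H.
exact: sub0mx.
Qed.

Lemma EB_split S : EBm S + EBm (~: S) = 1%:M.
Proof.
apply/matrixP=> i j; rewrite !mxE inE; case: eqP => //=; case: (i \in S) => //=;
  by rewrite ?addr0 ?add0r.
Qed.

Definition pres g S := (EBm S *m g <= EBm S)%MS.

Lemma pres_entry g S : (forall k l, k \in S -> g k l != 0 -> l \in S) -> pres g S.
Proof.
move=> H; apply: sub_EB => k l lS; rewrite mulEBl; case: ifP => // kS.
by apply/eqP; apply: contraNT lS => nz; exact: H kS nz.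
Qed.

Lemma entry_pres M S k l : pres M S -> k \in S -> M k l != 0 -> l \in S.
Proof.
move=> P kS; apply: contraTT => lS; rewrite negbK; apply/eqP.
by have := EB_sub P k lS; rewrite mulEBl kS.
Qed.

Lemma pres_eq g S : g \in unitmx -> pres g S -> (EBm S *m g :=: EBm S)%MS.
Proof.
move=> ug P; apply/eqmxP; rewrite -(mxrank_leqif_eq P).
by rewrite mxrankMfree ?row_free_unit.
Qed.

Lemma pres_inv g S : g \in unitmx -> pres g S -> pres (invmx g) S.
Proof.
move=> ug P; rewrite /pres; have e := pres_eq ug P.
have : (EBm S <= EBm S *m g)%MS by rewrite e.
move/(submxMr (invmx g)); by rewrite mulmxK.
Qed.


Lemma capmxMunit m1 m2 (A : 'M[E]_(m1, N)) (B : 'M[E]_(m2, N)) g :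
  g \in unitmx -> ((A :&: B) *m g :=: A *m g :&: B *m g)%MS.
Proof.
move=> ug; apply/eqmxP; rewrite capmxMr /=.
set X := (A *m g :&: B *m g)%MS.
rewrite -[X in (X <= _)%MS](mulmxKV ug); apply: submxMr.
rewrite sub_capmx; apply/andP; split.
  by rewrite -[A](mulmxK ug); apply: submxMr; apply: capmxSl.
by rewrite -[B](mulmxK ug); apply: submxMr; apply: capmxSr.
Qed.

Lemma ker_conj g D : g \in unitmx ->
  (kermx (invmx g *m D *m g) :=: kermx D *m g)%MS.
Proof.
move=> ug; apply/eqmxP; apply/andP; split.
  set K := kermx _.
  rewrite -[K](mulmxKV ug); apply: submxMr; rewrite sub_kermx.
  have h : K *m (invmx g *m D *m g) = 0 by apply/eqP; rewrite -sub_kermx.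
  have -> : K *m invmx g *m D = K *m (invmx g *m D *m g) *m invmx g by rewrite !mulmxA mulmxK.
  by rewrite h mul0mx.
rewrite sub_kermx !mulmxA mulmxK //.
have /eqP -> : kermx D *m D == 0 by rewrite -sub_kermx.
by rewrite mul0mx.
Qed.

Lemma rows_conj g D : g \in unitmx -> (invmx g *m D *m g :=: D *m g)%MS.
Proof.
move=> ug; rewrite -mulmxA; apply: eqmxMfull; by rewrite row_full_unit unitmx_inv.
Qed.

Lemma EBD_conj g D S : g \in unitmx -> pres g S ->
  (EBm S *m (invmx g *m D *m g) :=: EBm S *m D *m g)%MS.
Proof.
move=> ug P; rewrite !mulmxA; apply: eqmxMr; apply: eqmxMr.
by apply: pres_eq; rewrite ?unitmx_inv //; apply: pres_inv.
Qed.

Lemma EB_conj g S : g \in unitmx -> pres g S -> (EBm S :=: EBm S *m g)%MS.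
Proof. by move=> ug P; apply: eqmx_sym; apply: pres_eq. Qed.


Lemma adds_conj m1 m2 m3 m4 (A' : 'M[E]_(m1, N)) (A : 'M[E]_(m2, N))
   (B' : 'M[E]_(m3, N)) (B : 'M[E]_(m4, N)) g :
  (A' :=: A *m g)%MS -> (B' :=: B *m g)%MS -> (A' + B' :=: (A + B)%MS *m g)%MS.
Proof.
move=> eA eB; apply: eqmx_trans (adds_eqmx eA eB) _.
exact: eqmx_sym (addsmxMr A B g).
Qed.

Lemma cap_conj m1 m2 m3 m4 (A' : 'M[E]_(m1, N)) (A : 'M[E]_(m2, N))
   (B' : 'M[E]_(m3, N)) (B : 'M[E]_(m4, N)) g : g \in unitmx ->
  (A' :=: A *m g)%MS -> (B' :=: B *m g)%MS -> (A' :&: B' :=: (A :&: B)%MS *m g)%MS.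
Proof.
move=> ug eA eB; apply: eqmx_trans (cap_eqmx eA eB) _.
exact: eqmx_sym (capmxMunit A B ug).
Qed.

Definition phi M T T' C :=
  ~~ (EBm T' *m M *m EBm C <= EBm T *m M *m EBm C)%MS.

Lemma EB_C_split g C : pres g (~: C) -> EBm C *m (g *m EBm C) = g *m EBm C.
Proof.
move=> P; rewrite -[in RHS](mul1mx g) -(EB_split C) mulmxDl mulmxDl mulmxA.
suff -> : EBm (~: C) *m g *m EBm C = 0 by rewrite addr0.
apply/matrixP=> k l; rewrite mulEBr [RHS]mxE; case: ifP => // lC.
by apply: (EB_sub P); rewrite inE lC.
Qed.

Lemma phi_inv1 g gi M T T' C : g *m gi = 1%:M -> pres gi T' -> pres g T ->
  pres g (~: C) ->
  (EBm T' *m M *m EBm C <= EBm T *m M *m EBm C)%MS ->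
  (EBm T' *m (gi *m M *m g) *m EBm C <= EBm T *m (gi *m M *m g) *m EBm C)%MS.
Proof.
move=> ggi P1 P2 P3 H.
have e1 : forall X : 'M[E]_N, X *m g *m EBm C = X *m EBm C *m (g *m EBm C).
  by move=> X; rewrite -(mulmxA X (EBm C)) EB_C_split // mulmxA.
rewrite !mulmxA.
apply: (submx_trans (_ : _ <= EBm T' *m M *m g *m EBm C)%MS).
  by rewrite -!mulmxA mulmxA; apply: submxMr.
rewrite e1; apply: (submx_trans (submxMr _ H)); rewrite -e1.
rewrite -!mulmxA [X in (_ <= X)%MS]mulmxA; apply: submxMr.
have e2 : EBm T = EBm T *m g *m gi by rewrite -mulmxA ggi mulmx1.
by rewrite {1}e2; apply: submxMr.
Qed.

Lemma phi_inv g M T T' C : g \in unitmx -> pres g T -> pres g T' -> pres g (~: C) ->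
  phi (invmx g *m M *m g) T T' C = phi M T T' C.
Proof.
move=> ug P1 P2 P3; rewrite /phi; congr negb; apply/idP/idP => H.
  have := phi_inv1 (g := invmx g) (gi := g) (mulVmx ug) P2 (pres_inv ug P1)
     (pres_inv ug P3) H.
  have -> : g *m (invmx g *m M *m g) *m invmx g = M.
    by rewrite !mulmxA mulmxV // mul1mx mulmxK.
  by [].
exact: phi_inv1 (mulmxV ug) (pres_inv ug P2) P1 P3 H.
Qed.


Lemma EBMEB S M C k l :
  (EBm S *m M *m EBm C) k l = if (k \in S) && (l \in C) then M k l else 0.
Proof. by rewrite mulEBr mulEBl; case: (k \in S); case: (l \in C). Qed.

Lemma phi_elem M T T' C i :
  (forall k, (k \in T') = (k == i) || (k \in T)) -> i \notin T ->
  (forall k l, k \in T -> l \in C -> M i l != 0 -> M k l = 0) ->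
  phi M T T' C = [exists l in C, M i l != 0].
Proof.
move=> eT iT H; apply/idP/idP.
  apply: contraLR; rewrite negb_exists => /forallP H2; rewrite /phi negbK.
  have -> : EBm T' *m M *m EBm C = EBm T *m M *m EBm C; last exact: submx_refl.
  apply/matrixP=> k l; rewrite !EBMEB eT; case: eqP => [->|_] //=.
  rewrite (negbTE iT) /=; case lC: (l \in C) => //.
  by have := H2 l; rewrite lC /= negbK => /eqP.
case/existsP=> l /andP[lC nz]; apply/negP => /submxP[X e].
move: (nz); have := congr1 (fun A : 'M[E]_N => A i l) e; rewrite EBMEB eT eqxx lC /= => ->.
rewrite mxE big1 ?eqxx // => m _; rewrite EBMEB lC andbT.
by case: ifP => mT; rewrite ?mulr0 // (H m l mT lC nz) mulr0.
Qed.

Definition closedB (B : {set 'I_N}) S := forall k l : 'I_N, k \in S -> (l <= k)%N -> (k \in B -> l \in B) -> l \in S.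

Lemma equiv_pres deg B D D' : AB_equiv deg B D D' ->
  exists g, [/\ g \in unitmx, D' = invmx g *m D *m g & forall S, closedB B S -> pres g S].
Proof.
case=> g [ug tri _ gB ->]; exists g; split=> // S cS; apply: pres_entry => k l kS nz.
by apply: (cS k) => //; [apply: tri | move=> kB; apply: gB kB nz].
Qed.

End Aux.

Section Sets.
Variables (E : fieldType) (N : nat) (B : {set 'I_N}).
Local Notation EBm := (EB E).
Implicit Types (S T C : {set 'I_N}) (M D g : 'M[E]_N).

Definition TB (i : 'I_N) := [set k : 'I_N | (k \in B) && (k < i)%N].
Definition TB' (i : 'I_N) := [set k : 'I_N | (k \in B) && (k <= i)%N].
Definition CB (j : 'I_N) := [set l : 'I_N | (l \notin B) || (j <= l)%N].
Definition TN (i : 'I_N) := [set k : 'I_N | (k \in B) || (k < i)%N].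
Definition TN' (i : 'I_N) := [set k : 'I_N | (k \in B) || (k <= i)%N].
Definition CN (j : 'I_N) := [set l : 'I_N | (l \notin B) && (j <= l)%N].

Definition phiB M i j := phi M (TB i) (TB' i) (CB j).
Definition phiN M i j := phi M (TN i) (TN' i) (CN j).

Lemma leq_ordE (k i : 'I_N) : (k <= i)%N = (k == i) || (k < i)%N.
Proof. by rewrite leq_eqVlt. Qed.

Lemma closed_TB i : closedB B (TB i).
Proof. by move=> k l; rewrite !inE => /andP[kB ki] lk H; rewrite H //= (leq_ltn_trans lk ki). Qed.
Lemma closed_TB' i : closedB B (TB' i).
Proof. by move=> k l; rewrite !inE => /andP[kB ki] lk H; rewrite H //= (leq_trans lk ki). Qed.
Lemma closed_TN i : closedB B (TN i).
Proof.
move=> k l; rewrite !inE => /orP[kB|ki] lk H; first by rewrite H.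
by rewrite (leq_ltn_trans lk ki) orbT.
Qed.
Lemma closed_TN' i : closedB B (TN' i).
Proof.
move=> k l; rewrite !inE => /orP[kB|ki] lk H; first by rewrite H.
by rewrite (leq_trans lk ki) orbT.
Qed.
Lemma closed_CBc j : closedB B (~: CB j).
Proof.
move=> k l; rewrite !inE !negb_or !negbK -!ltnNge => /andP[kB kj] lk H.
by rewrite H //= (leq_ltn_trans lk kj).
Qed.
Lemma closed_CNc j : closedB B (~: CN j).
Proof.
move=> k l; rewrite !inE !negb_and !negbK -!ltnNge => /orP[kB|kj] lk H.
  by rewrite H.
by rewrite (leq_ltn_trans lk kj) orbT.
Qed.

Lemma phiB_equiv deg D D' i j : AB_equiv deg B D D' -> phiB D' i j = phiB D i j.
Proof.
case/equiv_pres=> g [ug -> P]; apply: phi_inv => //; apply: P.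
- exact: closed_TB. - exact: closed_TB'. - exact: closed_CBc.
Qed.

Lemma phiN_equiv deg D D' i j : AB_equiv deg B D D' -> phiN D' i j = phiN D i j.
Proof.
case/equiv_pres=> g [ug -> P]; apply: phi_inv => //; apply: P.
- exact: closed_TN. - exact: closed_TN'. - exact: closed_CNc.
Qed.

Definition Binv D := forall i j, i \in B -> D i j != 0 -> j \in B.

Lemma phiB_elem D i j : Binv D -> elem_on B D -> i \in B ->
  phiB D i j = [exists l in CB j, D i l != 0].
Proof.
move=> BD [_ inj] iB; apply: phi_elem.
- by move=> k; rewrite !inE leq_ordE; case: eqP => [->|] //=; rewrite iB.
- by rewrite inE ltnn andbF.
move=> k l; rewrite inE => /andP[kB ki] _ nz; apply/eqP; apply: contraTT ki => nz'.
have lB := BD _ _ iB nz.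
by rewrite (inj k i l kB iB lB nz' nz) ltnn.
Qed.

Lemma phiN_elem D i j : Binv D -> elem_on (~: B) D -> i \notin B ->
  phiN D i j = [exists l in CN j, D i l != 0].
Proof.
move=> BD [_ inj] iB; apply: phi_elem.
- by move=> k; rewrite !inE leq_ordE; case: eqP => [->|] //=; rewrite orbT.
- by rewrite inE ltnn orbF.
move=> k l; rewrite inE => /orP[kB|ki]; rewrite inE => /andP[lB _] nz.
  by apply/eqP; apply: contraNT lB => nz'; apply: BD kB nz'.
apply/eqP; apply: contraTT ki => nz'.
have kB : k \notin B.
  by apply: contraNN lB => kB; exact: BD kB nz'.
by rewrite (inj k i l) ?inE ?ltnn.
Qed.

Lemma row_uniq S D i j j' : elem_on S D -> i \in S -> j \in S -> j' \in S ->
  D i j != 0 -> D i j' != 0 -> j = j'.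
Proof.
case=> row _ iS jS j'S nz nz'; case: (row i iS) => [z|[j0 [_ _ o]]].
  by rewrite (z j jS) eqxx in nz.
case: (eqVneq j j0) => [->|ne]; last by rewrite (o j jS ne) eqxx in nz.
case: (eqVneq j' j0) => [->|ne'] //; by rewrite (o j' j'S ne') eqxx in nz'.
Qed.


Lemma nzB D1 D2 i j : Binv D1 -> Binv D2 -> elem_on B D1 -> elem_on B D2 ->
  (forall i j, phiB D1 i j = phiB D2 i j) -> i \in B -> j \in B ->
  D1 i j != 0 -> D2 i j != 0.
Proof.
move=> B1 B2 e1 e2 ph iB jB nz.
have : phiB D2 i j.
  rewrite -ph phiB_elem //; apply/existsP; exists j; by rewrite inE leqnn orbT nz.
rewrite phiB_elem // => /existsP[l /andP[]]; rewrite inE => /orP[lB|jl] nzl.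
  by rewrite (B2 _ _ iB nzl) in lB.
have lB := B2 _ _ iB nzl.
case: (eqVneq j l) => [-> //|ne].
have jl' : (j < l)%N by rewrite ltn_neqAle jl andbT.
have : phiB D1 i l.
  rewrite ph phiB_elem //; apply/existsP; exists l; by rewrite inE leqnn orbT nzl.
rewrite phiB_elem // => /existsP[l' /andP[]]; rewrite inE => /orP[l'B|ll'] nzl'.
  by rewrite (B1 _ _ iB nzl') in l'B.
have l'B := B1 _ _ iB nzl'.
have e := row_uniq e1 iB jB l'B nz nzl'.
by move: (leq_trans jl' ll'); rewrite e ltnn.
Qed.

Lemma nzN D1 D2 i j : Binv D1 -> Binv D2 -> elem_on (~: B) D1 -> elem_on (~: B) D2 ->
  (forall i j, phiN D1 i j = phiN D2 i j) -> i \notin B -> j \notin B ->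
  D1 i j != 0 -> D2 i j != 0.
Proof.
move=> B1 B2 e1 e2 ph iB jB nz.
have iB' : i \in ~: B by rewrite inE.
have : phiN D2 i j.
  rewrite -ph phiN_elem //; apply/existsP; exists j; by rewrite inE leqnn jB nz.
rewrite phiN_elem // => /existsP[l /andP[]]; rewrite inE => /andP[lB jl] nzl.
case: (eqVneq j l) => [-> //|ne].
have jl' : (j < l)%N by rewrite ltn_neqAle jl andbT.
have : phiN D1 i l.
  rewrite ph phiN_elem //; apply/existsP; exists l; by rewrite inE leqnn lB nzl.
rewrite phiN_elem // => /existsP[l' /andP[]]; rewrite inE => /andP[l'B ll'] nzl'.
have e := row_uniq e1 iB' (_ : j \in ~: B) (_ : l' \in ~: B) nz nzl'.
by move: (leq_trans jl' ll'); rewrite e ?inE // ltnn.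
Qed.

Lemma sets_eq D1 D2 :
  (forall i j, i \in B -> j \in B -> (D1 i j != 0) = (D2 i j != 0)) ->
  (forall i j, i \notin B -> j \notin B -> (D1 i j != 0) = (D2 i j != 0)) ->
  [/\ Pset B D1 = Pset B D2, Qset B D1 = Qset B D2 & Rset B D1 = Rset B D2] /\
  [/\ Xset B D1 = Xset B D2, Yset B D1 = Yset B D2 & Zset B D1 = Zset B D2] /\
  [/\ (forall q r, bijQR B D1 q r = bijQR B D2 q r)
    & (forall y z, bijYZ B D1 y z = bijYZ B D2 y z)].
Proof.
move=> HB HN.
have eQ : Qset B D1 = Qset B D2.
  apply/setP=> i; rewrite !inE; case iB: (i \in B) => //=.
  by apply: eq_existsb => j; case jB: (j \in B) => //=; apply: HB.
have eR : Rset B D1 = Rset B D2.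
  apply/setP=> j; rewrite !inE; case jB: (j \in B) => //=.
  by apply: eq_existsb => i; case iB: (i \in B) => //=; apply: HB.
have eY : Yset B D1 = Yset B D2.
  apply/setP=> i; rewrite !inE; case iB: (i \in B) => //=.
  by apply: eq_existsb => j; rewrite inE; case jB: (j \in B) => //=; apply: HN; rewrite ?iB ?jB.
have eZ : Zset B D1 = Zset B D2.
  apply/setP=> j; rewrite !inE; case jB: (j \in B) => //=.
  by apply: eq_existsb => i; rewrite inE; case iB: (i \in B) => //=; apply: HN; rewrite ?iB ?jB.
split; first by rewrite /Pset eQ eR.
split; first by rewrite /Xset eY eZ.
split=> a b.
  rewrite /bijQR; case aB: (a \in B) => //=; case bB: (b \in B) => //=; exact: HB.
rewrite /bijYZ; case aB: (a \in B) => //=; case bB: (b \in B) => //=; apply: HN; by rewrite ?aB ?bB.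
Qed.

End Sets.

Section Hess.
Variables (E : fieldType) (N : nat) (B : {set 'I_N}).
Local Notation EBm := (EB E).
Implicit Types (S T C : {set 'I_N}) (M D g : 'M[E]_N).

Lemma Ipre_conj g D S : g \in unitmx -> pres g B -> pres g S ->
  (Ipre B (invmx g *m D *m g) S :=: Ipre B D S *m g)%MS.
Proof.
move=> ug PB PS; rewrite /Ipre.
apply: eqmx_trans (eqmx_sym (capmxMunit _ _ ug)).
apply: cap_eqmx.
  apply: eqmx_trans (eqmx_sym (addsmxMr _ _ _)).
  apply: adds_eqmx; last exact: EBD_conj.
  apply: eqmx_trans (eqmx_sym (capmxMunit _ _ ug)).
  apply: cap_eqmx; [exact: ker_conj | exact: EB_conj].
apply: eqmx_trans (eqmx_sym (capmxMunit _ _ ug)).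
apply: cap_eqmx; [exact: rows_conj | exact: EB_conj].
Qed.

Lemma closed_Sle (b : 'I_N) : closedB B [set b' in B | (b' <= b)%N].
Proof. by move=> k l; rewrite !inE => /andP[kB kb] lk H; rewrite H //= (leq_trans lk kb). Qed.
Lemma closed_Slt (b : 'I_N) : closedB B [set b' in B | (b' < b)%N].
Proof. by move=> k l; rewrite !inE => /andP[kB kb] lk H; rewrite H //= (leq_ltn_trans lk kb). Qed.
Lemma closed_B : closedB B B.
Proof. by move=> k l kB _; apply. Qed.

Lemma H_ess_equiv deg D D' : AB_equiv deg B D D' -> H_ess B D' = H_ess B D.
Proof.
case/equiv_pres=> g [ug -> P]; apply/setP=> b; rewrite !inE.
case: (b \in B) => //=.
rewrite !(Ipre_conj D ug (P _ closed_B) (P _ (@closed_Sle b))).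
rewrite !(Ipre_conj D ug (P _ closed_B) (P _ (@closed_Slt b))).
by rewrite !submxMfree ?row_free_unit.
Qed.

End Hess.

Section Elem.
Variables (E : fieldType) (N : nat) (B : {set 'I_N}).
Local Notation EBm := (EB E).
Local Notation ek k := (delta_mx 0 k : 'rV[E]_N).
Implicit Types (S T C : {set 'I_N}) (M D g : 'M[E]_N).

Definition good D := [/\ D *m D = 0, Binv B D, elem_on B D & elem_on (~: B) D].

Lemma e_mul M k l : (ek k *m M) 0 l = M k l.
Proof. by rewrite -rowE mxE. Qed.

Lemma one1 S D i j : elem_on S D -> i \in S -> j \in S -> D i j != 0 -> D i j = 1.
Proof.
case=> row _ iS jS nz; case: (row i iS) => [z|[j0 [_ e o]]].
  by rewrite (z j jS) eqxx in nz.
by case: (eqVneq j j0) => [->|ne] //; rewrite (o j jS ne) eqxx in nz.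
Qed.

Lemma DD0 D i j : good D -> \sum_k D i k * D k j = 0.
Proof. by case=> e _ _ _; have := congr1 (fun A : 'M[E]_N => A i j) e; rewrite !mxE. Qed.

Lemma inP D p : p \in Pset B D ->
  [/\ p \in B, (forall l, l \in B -> D p l = 0) & (forall k, k \in B -> D k p = 0)].
Proof.
rewrite !inE => /andP[]; rewrite negb_or => /andP[nQ nR] pB; rewrite pB /= in nQ nR.
split=> // l lB; apply/eqP.
  by apply: contraNT (nQ) => nz; apply/existsP; exists l; rewrite lB nz.
by apply: contraNT (nR) => nz; apply/existsP; exists l; rewrite lB nz.
Qed.

Lemma inX D x : x \in Xset B D ->
  [/\ x \notin B, (forall l, l \notin B -> D x l = 0), x \notin Yset B D & x \notin Zset B D].
Proof.
rewrite !inE negb_or => /andP[/andP[nY nZ] xB]; rewrite xB /= in nY nZ.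
split=> //; rewrite ?inE ?xB //= => l lB; apply/eqP; apply: contraNT (nY) => nz.
by apply/existsP; exists l; rewrite inE lB.
Qed.

Lemma rowQ D q r : good D -> bijQR B D q r -> ek q *m D = ek r.
Proof.
case=> _ BD eB _ /and3P[qB rB nz]; apply/matrixP=> i l; rewrite ord1 e_mul mxE eqxx /=.
case: (eqVneq l r) => [->|ne]; first by rewrite (one1 eB).
case lB: (l \in B).
  by apply/eqP; apply: contraNT ne => nzl; apply/eqP; exact: (row_uniq eB qB lB rB nzl nz).
by apply/eqP; apply: contraFT lB => nzl; apply: BD qB nzl.
Qed.

Lemma rowP0 D p : good D -> p \in Pset B D -> ek p *m D = 0.
Proof.
case=> _ BD _ _ /inP[pB H _]; apply/matrixP=> i l; rewrite ord1 e_mul mxE.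
case lB: (l \in B); first exact: H.
by apply/eqP; apply: contraFT lB => nzl; apply: BD pB nzl.
Qed.

Lemma mulY D y z (s : 'rV[E]_N) : good D -> bijYZ B D y z -> (s *m D) 0 z = s 0 y.
Proof.
case=> _ BD _ eN /and3P[yB zB nz]; rewrite mxE (bigD1 y) //= (one1 eN) ?inE // mulr1.
rewrite big1 ?addr0 // => k ky; case: (eqVneq (D k z) 0) => [->|nzk]; first by rewrite mulr0.
have kB : k \notin B by apply: contraNN zB => kB; apply: BD kB nzk.
have := (proj2 eN) k y z; rewrite !inE => /(_ kB yB zB nzk nz) ke.
by rewrite ke eqxx in ky.
Qed.


Lemma mulQ D q r (s : 'rV[E]_N) : good D -> bijQR B D q r ->
  (forall k, k \notin B -> s 0 k = 0) -> (s *m D) 0 r = s 0 q.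
Proof.
case=> _ BD eB _ /and3P[qB rB nz] s0; rewrite mxE (bigD1 q) //= (one1 eB) // mulr1.
rewrite big1 ?addr0 // => k kq; case kB: (k \in B); last by rewrite s0 ?kB ?mul0r.
case: (eqVneq (D k r) 0) => [->|nzk]; first by rewrite mulr0.
by rewrite ((proj2 eB) k q r kB qB rB nzk nz) eqxx in kq.
Qed.

Lemma colZP D z p : good D -> z \in Zset B D -> p \in Pset B D -> D z p = 0.
Proof.
move=> G; case: (G) => _ BD eB eN.
rewrite inE => /andP[zB /existsP[y /andP[yB nz]]] /inP[pB _ Hp].
have := DD0 y p G; rewrite (bigD1 z) //= (one1 eN yB zB nz) mul1r big1 ?addr0 // => k kz.
case kB: (k \in B); first by rewrite Hp ?mulr0.
case: (eqVneq (D y k) 0) => [->|nzk]; first by rewrite mul0r.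
have kB' : k \in ~: B by rewrite inE kB.
by rewrite (row_uniq eN yB kB' zB nzk nz) eqxx in kz.
Qed.

Lemma XQ D x q : good D -> x \in Xset B D -> q \in Qset B D -> D x q = 0.
Proof.
move=> G; case: (G) => _ BD eB eN.
move=> /inX[xB Hx _ _]; rewrite inE => /andP[qB /existsP[r /andP[rB nz]]].
have := DD0 x r G; rewrite (bigD1 q) //= (one1 eB qB rB nz) mulr1 big1 ?addr0 // => k kq.
case kB: (k \in B); last by rewrite Hx ?kB ?mul0r.
case: (eqVneq (D k r) 0) => [->|nzk]; first by rewrite mulr0.
by rewrite ((proj2 eB) k q r kB qB rB nzk nz) eqxx in kq.
Qed.

End Elem.

Section Hsub.
Variables (E : fieldType) (N : nat) (B : {set 'I_N}).
Local Notation EBm := (EB E).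
Local Notation ek k := (delta_mx 0 k : 'rV[E]_N).
Implicit Types (S T C : {set 'I_N}) (M D g : 'M[E]_N).

Definition Sle (b : 'I_N) := [set b' in B | (b' <= b)%N].
Definition Slt (b : 'I_N) := [set b' in B | (b' < b)%N].

Lemma rowwise m (A : 'M[E]_(m, N)) m2 (X : 'M[E]_(m2, N)) :
  (forall v : 'rV[E]_N, (v <= A)%MS -> (v <= X)%MS) -> (A <= X)%MS.
Proof. by move=> H; apply/row_subP => i; apply: H; apply: row_sub. Qed.

Lemma Ipre_mono D S S' : {subset S <= S'} -> (Ipre B D S <= Ipre B D S')%MS.
Proof.
move=> sS; apply: capmxS (submx_refl _); apply: addsmxS (submx_refl _).
by apply: capmxS; [apply: submx_refl | apply: EBS].
Qed.

Lemma low_b (v : 'rV[E]_N) b : (v <= EBm (Sle b))%MS -> v 0 b = 0 -> (v <= EBm (Slt b))%MS.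
Proof.
move=> sv vb; apply: sub_EB => k l; rewrite !inE => H.
case: (eqVneq l b) => [->|ne]; first by rewrite ord1.
apply: (EB_sub sv); rewrite !inE; apply: contra H => /andP[-> lb] /=.
by rewrite ltn_neqAle lb andbT.
Qed.

Lemma Hsub_crit D b : b \in B ->
  (kermx D :&: EBm (Sle b) <= (kermx D :&: EBm (Slt b)) + EBm B *m D)%MS ->
  b \notin H_ess B D.
Proof.
move=> bB H; rewrite inE bB /= negbK; apply/andP; split; last first.
  apply: Ipre_mono => k; rewrite !inE => /andP[-> /ltnW] //.
apply: capmxS (submx_refl _); rewrite addsmx_sub H /=; exact: addsmxSr.
Qed.

Lemma H_sub_P D : good B D -> H_ess B D \subset Pset B D.
Proof.
move=> G; case: (G) => DD BD eB eN.
apply/subsetP => b bH.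
have bB : b \in B by move: bH; rewrite inE => /andP[].
apply: contraLR bH => nP.
apply: Hsub_crit => //.
have [bQ|bR] : b \in Qset B D \/ b \in Rset B D.
    by move: nP; rewrite !inE bB /= andbT negbK => /orP[]; [left|right].
  move: (bQ); rewrite inE => /andP[_ /existsP[r /andP[rB nz]]].
  apply: rowwise => v; rewrite sub_capmx => /andP[vK vS].
  apply: submx_trans (addsmxSl _ _); rewrite sub_capmx vK /=; apply: low_b => //.
  have := mulQ (s := v) G (_ : bijQR B D b r); rewrite /bijQR bB rB nz => /(_ isT) <-.
    have /eqP -> : v *m D == 0 by rewrite -sub_kermx.
    by rewrite mxE.
  by move=> k kB; apply: (EB_sub vS); rewrite inE (negbTE kB).
move: (bR); rewrite inE => /andP[_ /existsP[q /andP[qB nz]]].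
have eq := rowQ G (_ : bijQR B D q b); rewrite /bijQR qB bB nz in eq; have {}eq := eq isT.
apply: rowwise => v; rewrite sub_capmx => /andP[vK vS].
have -> : v = (v - v 0 b *: ek b) + v 0 b *: ek b by rewrite subrK.
apply: addmx_sub; last first.
  apply: submx_trans (addsmxSr _ _); apply: scalemx_sub.
  apply: (submx_trans (_ : ek b <= ek q *m D)%MS); first by rewrite eq submx_refl.
  apply: submxMr; apply: sub_EB => k l lB; rewrite mxE.
  by rewrite andbC; case: eqP => // e; move: lB; rewrite e qB.
apply: submx_trans (addsmxSl _ _); rewrite sub_capmx; apply/andP; split.
  rewrite sub_kermx mulmxBl -scalemxAl -eq -mulmxA DD mulmx0 scaler0 subr0.
  by rewrite -sub_kermx.
apply: low_b.
  apply: sub_EB => k l lS; rewrite !mxE (EB_sub vS k lS) sub0r.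
  have lb : l != b by apply: contraNneq lS => ->; rewrite !inE bB leqnn.
  by rewrite (negbTE lb) andbF mulr0 oppr0.
by rewrite !mxE !eqxx mulr1 subrr.
Qed.


Lemma notX_Y D k : k \notin B -> k \notin Xset B D -> k \notin Zset B D -> k \in Yset B D.
Proof.
move=> kB kX kZ; move: kX kZ; rewrite /Xset /Yset /Zset !inE kB /= andbT negbK.
by case/orP => -> //.
Qed.

Lemma hplus_exists D b : good B D -> b \in H_ess B D ->
  exists2 x, x \in Xset B D & D x b != 0.
Proof.
move=> G bH; case: (G) => DD BD eB eN.
have bP := subsetP (H_sub_P G) b bH.
have /inP[bB _ colb] := bP.
case: (boolP [exists x in Xset B D, D x b != 0]) => [/existsP[x /andP[]]|nex].
  by exists x.
exfalso; move: bH; apply/negP; rewrite inE bB /= negbK; apply/andP; split; last first.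
  apply: Ipre_mono => k; rewrite !inE => /andP[-> /ltnW] //.
apply: rowwise => v; rewrite !sub_capmx => /andP[v1 v2]; rewrite v2 andbT.
case/sub_addsmxP: v1 => [[u1 u2] /= e].
have bet : (u2 *m (EBm B *m D)) 0 b = 0.
  apply: (colz (submxMl _ _)) => k; rewrite mulEBl; case: ifP => // kB; exact: colb.
case/andP: v2 => /submxP[t et] vB.
have vb : v 0 b = 0.
  rewrite et mxE big1 // => k _; case: (eqVneq (D k b) 0) => [->|nz]; first by rewrite mulr0.
  have kB : k \notin B by apply: contraNN (nz) => kB; rewrite colb.
  have kX : k \notin Xset B D.
    by apply: contraNN nz => kX; apply: contraNT nex => nz'; apply/existsP; exists k; rewrite kX nz'.
  have kZ : k \notin Zset B D by apply: contraNN nz => kZ; rewrite (colZP G kZ bP).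
  have := notX_Y kB kX kZ; rewrite inE => /andP[_ /existsP[z /andP[zB nzz]]].
  have bz : bijYZ B D k z by rewrite /bijYZ kB nzz; rewrite inE in zB; rewrite zB.
  rewrite -(mulY t G bz) -et (EB_sub vB) ?mul0r //; by rewrite inE in zB.
rewrite e; apply: addmx_sub_adds; last exact: submxMl.
have uK : (u1 *m (kermx D :&: EBm (Sle b)) <= kermx D :&: EBm (Sle b))%MS by exact: submxMl.
move: uK; rewrite !sub_capmx => /andP[-> uS] /=.
apply: low_b => //.
by move: vb; rewrite e mxE bet addr0 => ->.
Qed.

End Hsub.

Section Hplus.
Variables (E : fieldType) (N : nat) (B : {set 'I_N}).
Local Notation EBm := (EB E).
Local Notation ek k := (delta_mx 0 k : 'rV[E]_N).
Implicit Types (S T C : {set 'I_N}) (M D g : 'M[E]_N).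

Definition ImX D T := (EBm T *m D :&: EBm B)%MS.
Definition Phi D (x b : 'I_N) :=
  ~~ (ImX D (TN' B x) <= (ImX D (TN B x) + (kermx D :&: EBm (Slt B b))) + EBm B *m D)%MS.

Lemma ImX_conj g D T : g \in unitmx -> pres g B -> pres g T ->
  (ImX (invmx g *m D *m g) T :=: ImX D T *m g)%MS.
Proof.
move=> ug PB PT; rewrite /ImX; apply: eqmx_trans (eqmx_sym (capmxMunit _ _ ug)).
by apply: cap_eqmx; [exact: EBD_conj | exact: EB_conj].
Qed.


Lemma Phi_equiv deg D D' x b : AB_equiv deg B D D' -> Phi D' x b = Phi D x b.
Proof.
case/equiv_pres=> g [ug -> P]; rewrite /Phi.
have PB := P _ (@closed_B _ B).
have eK := cap_conj ug (ker_conj D ug) (EB_conj ug (P _ (@closed_Slt _ B b))).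
have eI := ImX_conj D ug PB (P _ (@closed_TN _ B x)).
have eR := adds_conj (adds_conj eI eK) (EBD_conj D ug PB).
rewrite eR (ImX_conj D ug PB (P _ (@closed_TN' _ B x))).
by rewrite submxMfree ?row_free_unit.
Qed.


Definition cz m (X : 'M[E]_(m, N)) p := forall v : 'rV[E]_N, (v <= X)%MS -> v 0 p = 0.

Lemma cz_adds m1 m2 (X : 'M[E]_(m1, N)) (Y : 'M[E]_(m2, N)) p : cz X p -> cz Y p -> cz (X + Y)%MS p.
Proof.
move=> cX cY v /sub_addsmxP[[u1 u2] /= ->]; rewrite mxE (cX _ (submxMl _ _)).
by rewrite (cY _ (submxMl _ _)) addr0.
Qed.

Lemma cz_capr m1 m2 (X : 'M[E]_(m1, N)) (Y : 'M[E]_(m2, N)) p : cz Y p -> cz (X :&: Y)%MS p.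
Proof. by move=> cY v sv; apply: cY; apply: submx_trans sv (capmxSr _ _). Qed.

Lemma cz_expl m (X : 'M[E]_(m, N)) p : (forall k, X k p = 0) -> cz X p.
Proof. by move=> H v sv; apply: (colz sv). Qed.

Lemma notY_X D k : k \notin B -> k \notin Yset B D -> k \notin Zset B D -> k \in Xset B D.
Proof.
move=> kB kY kZ; move: kY kZ; rewrite /Xset /Yset /Zset !inE kB /= andbT.
by move=> /negbTE -> /negbTE ->.
Qed.

Lemma Phi_quasi D x b : good B D -> quasi_elem B D -> x \in Xset B D ->
  Phi D x b = [exists p in Pset B D, (b <= p)%N && (D x p != 0)].
Proof.
move=> G Q xX; case: (G) => DD BD eB eN; case: Q => _ _ c3 c4.
have /inX[xB Hx xY xZ] := xX.
pose w := ek x *m D.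
have wB : (w <= EBm B)%MS by apply: sub_EB => k l lB; rewrite ord1 e_mul Hx.
have wI : (w <= ImX D (TN' B x))%MS.
  rewrite sub_capmx wB andbT; apply: submxMr; apply: sub_EB => k l lT; rewrite mxE.
  case: (eqVneq l x) => [e|ne]; last by rewrite andbF.
  by move: lT; rewrite e !inE leqnn orbT.
apply/idP/idP.
  apply: contraLR; rewrite negb_exists => /forallP Hn; rewrite /Phi negbK.
  apply: rowwise => v; rewrite sub_capmx => /andP[/submxP[t et] vB].
  have es : t *m EBm (TN' B x) = t *m EBm (TN B x) + t 0 x *: ek x.
    apply/rowP => k; rewrite [RHS]mxE !mulEBr [in X in _ + X]mxE [in X in _ + X]mxE.
    rewrite !inE eqxx /=; case: (eqVneq k x) => [->|ne].
      by rewrite (negbTE xB) leqnn ltnn /= mulr1 add0r.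
    by rewrite leq_ordE (negbTE ne) /= mulr0 addr0.
  have ev : v = (t *m EBm (TN B x)) *m D + t 0 x *: w.
    by rewrite et mulmxA es mulmxDl -scalemxAl.
  have v1B : ((t *m EBm (TN B x)) *m D <= EBm B)%MS.
    have -> : (t *m EBm (TN B x)) *m D = v - t 0 x *: w by rewrite ev addrK.
    by rewrite addmx_sub // -scaleNr scalemx_sub.
  pose Pl := [set l in Pset B D | (l < b)%N].
  have ew : w = w *m EBm Pl + w *m EBm (Rset B D).
    apply/rowP => l; rewrite [RHS]mxE !mulEBr /w !e_mul.
    case lR: (l \in Rset B D).
      by rewrite /Pl inE /Pset in_setD in_setU lR orbT /= add0r.
    rewrite addr0; case lPl: (l \in Pl) => //.
    case lB: (l \in B); last by rewrite Hx ?lB.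
    case lQ: (l \in Qset B D); first by apply: XQ G xX lQ.
    have lP : l \in Pset B D by rewrite /Pset in_setD in_setU lQ lR lB.
    move: lPl; rewrite /Pl inE lP /= => /negbT; rewrite -leqNgt => bl.
    by have := Hn l; rewrite lP bl /= negbK => /eqP.
  have wKB : (w <= (kermx D :&: EBm (Slt B b)) + EBm B *m D)%MS.
    rewrite ew; apply: addmx_sub_adds.
      apply: submx_trans (submxMl _ _) _; rewrite sub_capmx; apply/andP; split.
        rewrite sub_kermx; apply/eqP/matrixP => i l; rewrite mulEBl mxE; case: ifP => // iPl.
        have iP : i \in Pset B D by move: iPl; rewrite inE => /andP[].
        by have := congr1 (fun A : 'rV[E]_N => A 0 l) (rowP0 G iP); rewrite e_mul mxE.
      apply: EBS => l; rewrite /Pl inE => /andP[lP lb]; have /inP[lB _ _] := lP.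
      by rewrite /Slt inE lB lb.
    apply: submx_trans (submxMl _ _) _; apply: EB_subP => k kR.
    move: kR; rewrite inE => /andP[kB /existsP[q /andP[qB nz]]].
    have eq := rowQ G (_ : bijQR B D q k); rewrite /bijQR qB kB nz in eq; have {}eq := eq isT.
    apply: (submx_trans (_ : ek k <= ek q *m D)%MS); first by rewrite eq submx_refl.
    apply: submxMr; apply: sub_EB => i l lB; rewrite mxE.
    by rewrite andbC; case: eqP => // e; move: lB; rewrite e qB.
  rewrite ev; apply: addmx_sub.
    apply: submx_trans (addsmxSl _ _); apply: submx_trans (addsmxSl _ _).
    by rewrite sub_capmx v1B andbT -mulmxA; exact: submxMl.
  apply: scalemx_sub; apply: submx_trans wKB _; apply: addsmxS (submx_refl _).
  exact: addsmxSr.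
case/existsP => p /andP[pP /andP[bp nz]]; apply/negP => Hsub.
have /inP[pB _ colp] := pP.
have czR : cz ((ImX D (TN B x) + (kermx D :&: EBm (Slt B b))) + EBm B *m D)%MS p.
  apply: cz_adds; last first.
    by apply: cz_expl => k; rewrite mulEBl; case: ifP => // kB; apply: colp.
  apply: cz_adds; last first.
    apply: cz_capr; apply: cz_expl => k; rewrite EBE.
    case: eqP => //= ->; by rewrite !inE ltnNge bp andbF.
  move=> v; rewrite sub_capmx => /andP[/submxP[t et] vB].
  pose s := t *m EBm (TN B x).
  rewrite et mulmxA mxE big1 // => k _.
  case: (eqVneq (D k p) 0) => [->|nzk]; first by rewrite mulr0.
  have kB : k \notin B by apply: contraNN nzk => kB; rewrite colp.
  case kY: (k \in Yset B D).
    move: kY; rewrite inE => /andP[_ /existsP[z /andP[zB nzz]]].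
    have bz : bijYZ B D k z by rewrite /bijYZ kB nzz; rewrite inE in zB; rewrite zB.
    rewrite -(mulY s G bz) /s -mulmxA -et (EB_sub vB) ?mul0r //; by rewrite inE in zB.
  case kZ: (k \in Zset B D); first by rewrite (colZP G kZ pP) eqxx in nzk.
  have kX := notY_X kB (negbT kY) (negbT kZ).
  have e := c4 x k p xX kX pP nz nzk.
  by rewrite mulEBr -e !inE (negbTE xB) ltnn mul0r.
have := czR _ (submx_trans wI Hsub); rewrite e_mul => e; by rewrite e eqxx in nz.
Qed.

End Hplus.

Section Final.
Variables (E : fieldType) (N : nat) (B : {set 'I_N}).
Local Notation EBm := (EB E).
Implicit Types (S T C : {set 'I_N}) (M D g : 'M[E]_N).

Lemma good_equiv deg D0 D1 : MAB_diff deg B D0 -> AB_equiv deg B D0 D1 ->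
  elem_restr B D1 -> good B D1.
Proof.
move=> [_ DD _ inv] /equiv_pres[g [ug -> P]] [e1 e2]; split=> //.
  by rewrite !mulmxA mulmxK // -(mulmxA (invmx g) D0 D0) DD mulmx0 mul0mx.
move=> i j iB nz; apply: entry_pres nz => //.
have PB := P _ (@closed_B _ B).
have P0 : pres D0 B by apply: pres_entry => k l kB; apply: inv.
rewrite /pres !mulmxA; apply: (@submx_trans _ _ _ _ _ _ (EBm B *m D0 *m g)).
  by apply: submxMr; apply: submxMr; apply: pres_inv.
by apply: submx_trans (submxMr _ P0) _.
Qed.

Lemma hinv D1 D2 x b : good B D1 -> good B D2 -> quasi_elem B D1 -> quasi_elem B D2 ->
  (forall x b, Phi B D1 x b = Phi B D2 x b) ->
  x \in Xset B D1 -> x \in Xset B D2 -> b \in Pset B D1 -> Pset B D1 = Pset B D2 ->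
  D1 x b != 0 -> D2 x b != 0.
Proof.
move=> G1 G2 Q1 Q2 PhiE xX1 xX2 bP1 eP nz.
have c3 : forall x p p', x \in Xset B D1 -> p \in Pset B D1 -> p' \in Pset B D1 ->
    D1 x p != 0 -> D1 x p' != 0 -> p = p' by case: Q1.
have : Phi B D2 x b.
  by rewrite -PhiE Phi_quasi //; apply/existsP; exists b; rewrite bP1 leqnn nz.
rewrite Phi_quasi // => /existsP[p /andP[pP2 /andP[bp nzp]]].
case: (eqVneq b p) => [-> //|ne].
have bp' : (b < p)%N by rewrite ltn_neqAle bp andbT.
have : Phi B D1 x p.
  by rewrite PhiE Phi_quasi //; apply/existsP; exists p; rewrite pP2 leqnn nzp.
rewrite Phi_quasi // => /existsP[p' /andP[p'P1 /andP[pp' nzp']]].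
have e := c3 x b p' xX1 bP1 p'P1 nz nzp'.
by move: (leq_trans bp' pp'); rewrite e ltnn.
Qed.

End Final.

Unset Implicit Arguments.

Theorem corollary3p5 (E : fieldType) (N : nat) (deg : 'I_N -> int)
    (B : {set 'I_N}) (D0 D0' : 'M[E]_N) :
  MAB_diff deg B D0 -> MAB_diff deg B D0' -> AB_equiv deg B D0 D0' ->
  [/\
   H_ess B D0 = H_ess B D0',
   (forall D1 D2 : 'M[E]_N,
      AB_equiv deg B D0 D1 -> AB_equiv deg B D0' D2 ->
      elem_restr B D1 -> elem_restr B D2 ->
      [/\ Pset B D1 = Pset B D2, Qset B D1 = Qset B D2 & Rset B D1 = Rset B D2] /\
      [/\ Xset B D1 = Xset B D2, Yset B D1 = Yset B D2 & Zset B D1 = Zset B D2] /\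
      [/\ (forall q r, bijQR B D1 q r = bijQR B D2 q r),
          (forall y z, bijYZ B D1 y z = bijYZ B D2 y z) &
          H_ess B D0 \subset Pset B D1]) &
   (forall D1 D2 : 'M[E]_N,
      AB_equiv deg B D0 D1 -> AB_equiv deg B D0' D2 ->
      quasi_elem B D1 -> quasi_elem B D2 ->
      [/\ (forall b, b \in H_ess B D0 -> exists! x, hplus_rel B D1 b x),
          (forall b x, b \in H_ess B D0 -> hplus_rel B D1 b x = hplus_rel B D2 b x) &
          (forall b b' x, b \in H_ess B D0 -> b' \in H_ess B D0 ->
             hplus_rel B D1 b x -> hplus_rel B D1 b' x -> b = b')])].
Proof.
move=> M0 M0' e00.
have elemeq : forall D1 D2, AB_equiv deg B D0 D1 -> AB_equiv deg B D0' D2 ->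
    elem_restr B D1 -> elem_restr B D2 ->
    [/\ Pset B D1 = Pset B D2, Qset B D1 = Qset B D2 & Rset B D1 = Rset B D2] /\
    [/\ Xset B D1 = Xset B D2, Yset B D1 = Yset B D2 & Zset B D1 = Zset B D2] /\
    [/\ (forall q r, bijQR B D1 q r = bijQR B D2 q r)
      & (forall y z, bijYZ B D1 y z = bijYZ B D2 y z)].
  move=> D1 D2 e1 e2 r1 r2.
  have G1 := good_equiv M0 e1 r1; have G2 := good_equiv M0' e2 r2.
  case: (G1) => _ B1 eB1 eN1; case: (G2) => _ B2 eB2 eN2.
  have phB : forall i j, phiB B D1 i j = phiB B D2 i j.
    by move=> i j; rewrite (phiB_equiv _ _ e1) (phiB_equiv _ _ e2) (phiB_equiv _ _ e00).
  have phN : forall i j, phiN B D1 i j = phiN B D2 i j.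
    by move=> i j; rewrite (phiN_equiv _ _ e1) (phiN_equiv _ _ e2) (phiN_equiv _ _ e00).
  apply: sets_eq => i j iB jB; apply/idP/idP.
  - exact: (nzB B1 B2 eB1 eB2 phB).
  - by apply: (nzB B2 B1 eB2 eB1) => // i' j'; rewrite phB.
  - exact: (nzN B1 B2 eN1 eN2 phN).
  - by apply: (nzN B2 B1 eN2 eN1) => // i' j'; rewrite phN.
have eH : H_ess B D0 = H_ess B D0' by rewrite (H_ess_equiv e00).
split=> // D1 D2 e1 e2 r1 r2.
  have [s1 [s2 [s3 s4]]] := elemeq D1 D2 e1 e2 r1 r2.
  split=> //; split=> //; split=> //.
  rewrite -(H_ess_equiv e1); apply: H_sub_P; exact: good_equiv M0 e1 r1.
have [r1' _ c31 c41] := r1; have [r2' _ c32 c42] := r2.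
have G1 := good_equiv M0 e1 r1'; have G2 := good_equiv M0' e2 r2'.
have [[eP _ _] [[eX _ _] _]] := elemeq D1 D2 e1 e2 r1' r2'.
have H1 : H_ess B D0 = H_ess B D1 by rewrite (H_ess_equiv e1).
have HP : forall b, b \in H_ess B D0 -> b \in Pset B D1.
  by move=> b; rewrite H1; apply/subsetP/H_sub_P.
have PhiE : forall x b, Phi B D1 x b = Phi B D2 x b.
  by move=> x b; rewrite (Phi_equiv _ _ e1) (Phi_equiv _ _ e2) (Phi_equiv _ _ e00).
split.
- move=> b bH; have bP := HP b bH.
  rewrite H1 in bH; have [x xX nz] := hplus_exists G1 bH.
  exists x; split; first by rewrite /hplus_rel xX nz.
  move=> x' /andP[x'X nz']; exact: c41 x x' b xX x'X bP nz nz'.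
- move=> b x bH; have bP := HP b bH; rewrite /hplus_rel -eX.
  case xX: (x \in Xset B D1) => //=; apply/idP/idP => nz.
    by apply: (hinv G1 G2 r1 r2 PhiE xX _ bP eP nz); rewrite -eX.
  have xX2 : x \in Xset B D2 by rewrite -eX.
  have bP2 : b \in Pset B D2 by rewrite -eP.
  exact: (hinv G2 G1 r2 r1 (fun x' b' => esym (PhiE x' b')) xX2 xX bP2 (esym eP) nz).
- move=> b b' x bH b'H /andP[xX nz] /andP[_ nz'].
  exact: c31 x b b' xX (HP b bH) (HP b' b'H) nz nz'.
Qed.
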